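(* In the setting below, assume $\|\nabla f_i(x)\|\le G_i$ for all $x$ and $i$, and $\psi$ satisfies the $\mu_\psi$-condition. Let $\gamma_k=\eta_k\prod_{\ell=2}^k(1+n\eta_{\ell-1}\mu_\psi)$ for $k\in[K]$. Then for any permutations $\sigma_1,\dots,\sigma_K$, $$F(x_{K+1})-F(x_* )\le\frac{\|x_*-x_1\|^2-\|x_*-x_{K+1}\|^2}{2n\sum_{k=1}^K\gamma_k}+3\bar G^2n\sum_{k=1}^K\frac{\gamma_k\eta_k}{\sum_{\ell=k}^K\gamma_\ell}.$$
   Context: Setting. Let $n,d\in\mathbb N$, let $f_1,\dots,f_n:\mathbb R^d\to\mathbb R$ be convex, $f=\frac1n\sum_{i=1}^nf_i$, let $\psi:\mathbb R^d\to\mathbb R\cup\{+\infty\}$ be proper, closed and convex, and $F=f+\psi$. For a convex function $g$, $\nabla g(x)$ denotes an element of $\partial g(x)$ (for each $f_i$ a fixed selection of subgradients, the same one used in the algorithm), and $B_g(x,y)=g(x)-g(y)-\langle\nabla g(y),x-y\rangle$. The $\mu_\psi$-condition: $\mu_\psi\ge0$ and $B_\psi(x,y)\ge\frac{\mu_\psi}{2}\|x-y\|^2$ for all $x,y$ with $\partial\psi(y)\neq\emptyset$ and every choice of $\nabla\psi(y)\in\partial\psi(y)$. Assume there is $x_*\in\mathbb R^d$ with $F(x_* )=\inf_{x}F(x)\in\mathbb R$. Proximal shuffling gradient method: given $x_1\in\mathrm{dom}\,\psi$, a number of epochs $K\ge2$ and stepsizes $\eta_k>0$, for $k=1,\dots,K$: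 choose a permutation $\sigma_k=(\sigma_k^1,\dots,\sigma_k^n)$ of $[n]=\{1,\dots,n\}$; set $x_k^1=x_k$ and $x_k^{i+1}=x_k^i-\eta_k\nabla f_{\sigma_k^i}(x_k^i)$ for $i=1,\dots,n$; set $x_{k+1}=\arg\min_{x\in\mathbb R^d}\{n\psi(x)+\frac{1}{2\eta_k}\|x-x_k^{n+1}\|^2\}$. Lipschitz condition: constants $G_i>0$ with $\|\nabla f_i(x)\|\le G_i$ for all $x\in\mathbb R^d$, $i\in[n]$ (for every subgradient); $\bar G=\frac1n\sum_{i=1}^nG_i$. *)

(* Defs.v *)
From HB Require Import structures.
From mathcomp Require Import all_boot all_order all_algebra.
From mathcomp Require Import all_classical all_reals.
From mathcomp Require Import topology normedtype.
From mathcomp Require Import fingroup perm.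
Set Implicit Arguments. Unset Strict Implicit. Unset Printing Implicit Defensive.
Import Order.TTheory GRing.Theory Num.Theory.
Import numFieldNormedType.Exports.
Local Open Scope ring_scope.
Local Open Scope ereal_scope.
Local Open Scope classical_set_scope.

Section Defs.
Variable R : realType.
Variable d : nat.

Definition vec := 'rV[R]_d.

Definition dot (x y : vec) : R := (\sum_(j < d) x ord0 j * y ord0 j)%R.
Definition sqnorm (x : vec) : R := dot x x.
Definition enorm (x : vec) : R := Num.sqrt (sqnorm x).

Definition convex_fun (f : vec -> R) : Prop :=
  forall (x y : vec) (t : R), (0 <= t <= 1)%R ->
    (f (t *: x + (1 - t) *: y) <= t * f x + (1 - t) * f y)%R.

Definition subgrad (f : vec -> R) (x v : vec) : Prop :=
  forall y : vec, (f x + dot v (y - x) <= f y)%R.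

Definition proper_fun (psi : vec -> \bar R) : Prop :=
  (forall x, psi x != -oo) /\ (exists x, psi x \is a fin_num).

Definition convex_efun (psi : vec -> \bar R) : Prop :=
  forall (x y : vec) (t : R), (0 <= t <= 1)%R ->
    psi (t *: x + (1 - t) *: y)%R <= t%:E * psi x + (1 - t)%R%:E * psi y.

Definition closed_fun (psi : vec -> \bar R) : Prop :=
  forall a : R, closed ([set x | psi x <= a%:E] : set vec).

Definition esubgrad (psi : vec -> \bar R) (y v : vec) : Prop :=
  psi y \is a fin_num /\ forall x : vec, psi y + (dot v (x - y)%R)%:E <= psi x.

(* mu_psi-condition: B_psi(x,y) >= mu/2 ||x-y||^2 for every y with nonempty
   subdifferential and every choice of subgradient at y. *)
Definition mu_condition (psi : vec -> \bar R) (mu : R) : Prop :=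
  (0 <= mu)%R /\
  forall (x y v : vec), esubgrad psi y v ->
    psi y + (dot v (x - y) + mu / 2 * sqnorm (x - y))%:E <= psi x.

(* One epoch of inner shuffling-gradient steps, starting at x with step eta
   and permutation s: returns x^{n+1}, where
   x^{i+1} = x^i - eta * g_{s(i)}(x^i), i = 1..n (0-based indices here). *)
Definition epoch_end (n : nat) (g : 'I_n -> vec -> vec) (s : 'S_n)
    (eta : R) (x : vec) : vec :=
  foldl (fun y j => (y - eta *: g j y)%R) x [seq s i | i <- enum 'I_n].

End Defs.

(* Main.v *)
Require Import Defs.
From HB Require Import structures.
From mathcomp Require Import all_boot all_order all_algebra.
From mathcomp Require Import all_classical all_reals.
From mathcomp Require Import topology normedtype.
From mathcomp Require Import fingroup perm.
From mathcomp Require Import ring lra.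
Import Order.TTheory GRing.Theory Num.Theory.
Local Open Scope ring_scope.
Set Implicit Arguments. Unset Strict Implicit. Unset Printing Implicit Defensive.

Local Close Scope ereal_scope.
Local Open Scope ring_scope.

Lemma dotC (R : realType) d (x y : vec R d) : dot x y = dot y x.
Proof. by rewrite /dot; apply eq_bigr => j _; rewrite mulrC. Qed.

Lemma dotDl (R : realType) d (x y z : vec R d) : dot (x + y) z = dot x z + dot y z.
Proof. by rewrite /dot -big_split; apply eq_bigr => j _; rewrite mxE mulrDl. Qed.

Lemma dotNl (R : realType) d (x y : vec R d) : dot (- x) y = - dot x y.
Proof. by rewrite /dot -sumrN; apply eq_bigr => j _; rewrite mxE mulNr. Qed.

Lemma dotZl (R : realType) d a (x y : vec R d) : dot (a *: x) y = a * dot x y.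
Proof. by rewrite /dot mulr_sumr; apply eq_bigr => j _; rewrite mxE mulrA. Qed.

Lemma dotBl (R : realType) d (x y z : vec R d) : dot (x - y) z = dot x z - dot y z.
Proof. by rewrite dotDl dotNl. Qed.

Lemma dotDr (R : realType) d (x y z : vec R d) : dot z (x + y) = dot z x + dot z y.
Proof. by rewrite dotC dotDl !(dotC z). Qed.
Lemma dotBr (R : realType) d (x y z : vec R d) : dot z (x - y) = dot z x - dot z y.
Proof. by rewrite dotC dotBl !(dotC z). Qed.
Lemma dotNr (R : realType) d (x y : vec R d) : dot x (- y) = - dot x y.
Proof. by rewrite dotC dotNl dotC. Qed.
Lemma dotZr (R : realType) d a (x y : vec R d) : dot x (a *: y) = a * dot x y.
Proof. by rewrite dotC dotZl dotC. Qed.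

Lemma sqnorm_ge0 (R : realType) d (x : vec R d) : 0 <= sqnorm x.
Proof. by apply: sumr_ge0 => j _; rewrite -expr2 sqr_ge0. Qed.

Lemma sqnormD (R : realType) d (x y : vec R d) :
  sqnorm (x + y) = sqnorm x + 2 * dot x y + sqnorm y.
Proof. rewrite /sqnorm dotDl !dotDr (dotC y x); ring. Qed.

Lemma sqnormB (R : realType) d (x y : vec R d) :
  sqnorm (x - y) = sqnorm x - 2 * dot x y + sqnorm y.
Proof. rewrite /sqnorm dotBl !dotBr (dotC y x); ring. Qed.

Lemma sqnormN (R : realType) d (x : vec R d) : sqnorm (- x) = sqnorm x.
Proof. by rewrite /sqnorm dotNl dotNr opprK. Qed.

Lemma sqnormZ (R : realType) d a (x : vec R d) : sqnorm (a *: x) = a ^+ 2 * sqnorm x.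
Proof. by rewrite /sqnorm dotZl dotZr mulrA expr2. Qed.

Lemma sqnorm_sym (R : realType) d (x y : vec R d) : sqnorm (x - y) = sqnorm (y - x).
Proof. by rewrite -sqnormN opprB. Qed.

Lemma young (R : realType) d (e lam : R) (p q : vec R d) : 0 < lam ->
  - (2 * e * dot p q) <= e ^+ 2 * lam * sqnorm p + sqnorm q / lam.
Proof.
move=> hl.
have h := sqnorm_ge0 ((e * lam) *: p + q).
rewrite sqnormD sqnormZ dotZl in h.
have hl0 : lam != 0 by rewrite gt_eqF.
have -> : e ^+ 2 * lam * sqnorm p + sqnorm q / lam =
  ((e * lam) ^+ 2 * sqnorm p + 2 * (e * lam * dot p q) + sqnorm q) / lam
    - 2 * e * dot p q.
  by field.
rewrite lerBrDr addrC subrr divr_ge0 // ltW //.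
Qed.

Lemma dot_le (R : realType) d (P Q : R) (p q : vec R d) : 0 < P -> 0 < Q ->
  sqnorm p <= P ^+ 2 -> sqnorm q <= Q ^+ 2 -> dot p q <= P * Q.
Proof.
move=> hP hQ hp hq.
have hl : 0 < Q / P by rewrite divr_gt0.
have := @young R d (-1) (Q/P) p q hl.
have hP0 : P != 0 by rewrite gt_eqF.
have hQ0 : Q != 0 by rewrite gt_eqF.
have h1 : (-1) ^+ 2 * (Q / P) * sqnorm p <= Q * P.
  have -> : Q * P = (-1) ^+ 2 * (Q / P) * P ^+ 2 by field.
  by rewrite ler_pM2l // expr2 mulN1r opprK mul1r.
have h2 : sqnorm q / (Q / P) <= Q * P.
  have -> : Q * P = Q ^+ 2 / (Q / P) by rewrite invf_div; field.
  by rewrite ler_pM2r ?invr_gt0.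
move=> h; lra.
Qed.

Lemma enorm_sq (R : realType) d (v : vec R d) (G : R) : enorm v <= G -> sqnorm v <= G ^+ 2.
Proof.
rewrite /enorm => h.
have h0 := sqnorm_ge0 v.
rewrite -(sqr_sqrtr h0) !expr2.
by apply: ler_pM; rewrite ?sqrtr_ge0.
Qed.

Local Close Scope ereal_scope.
Local Open Scope ring_scope.

Lemma disp_le (R : realType) d (I : Type) (g : I -> vec R d -> vec R d)
  (G : I -> R) (eta P : R) (p : vec R d) :
  0 < eta -> 0 < P -> (forall i, 0 < G i) ->
  (forall i y, sqnorm (g i y) <= G i ^+ 2) -> sqnorm p <= P ^+ 2 ->
  forall (l : seq I) (y : vec R d),
  dot p (y - foldl (fun y j => y - eta *: g j y) y l) <= eta * P * \sum_(j <- l) G j.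
Proof.
move=> he hP hG hg hp; elim=> [|a l IH] y /=.
  by rewrite big_nil subrr /dot big1 ?mulr0 // => j _; rewrite mxE mulr0.
rewrite big_cons.
set y' := y - eta *: g a y.
set e := foldl _ y' l.
have -> : y - e = eta *: g a y + (y' - e) by rewrite /y' addrA (addrC (eta *: g a y)) subrK.
rewrite dotDr dotZr.
have h1 := dot_le hP (hG a) hp (hg a y).
have h2 := IH y'.
rewrite -/e in h2.
have : eta * dot p (g a y) <= eta * (P * G a) by rewrite ler_pM2l.
nra.
Qed.

Lemma inner_step (R : realType) d (I : Type) (fi : I -> vec R d -> R)
  (g : I -> vec R d -> vec R d) (G : I -> R) (eta : R) (z w : vec R d) :
  0 < eta -> (forall i, 0 < G i) ->
  (forall i y, sqnorm (g i y) <= G i ^+ 2) ->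
  (forall i y, subgrad (fi i) y (g i y)) ->
  forall (l : seq I) (y : vec R d),
  let e := foldl (fun y j => y - eta *: g j y) y l in
  sqnorm (e - z) <= sqnorm (y - z) - 2 * eta * \sum_(a <- l) (fi a w - fi a z)
     - 2 * eta * \sum_(a <- l) dot (g a w) (e - w)
     + 3 * eta ^+ 2 * (\sum_(a <- l) G a) ^+ 2.
Proof.
move=> he hG hg hsub; elim=> [|a l IH] y /=.
  rewrite !big_nil; lra.
rewrite !big_cons.
set y' := y - eta *: g a y.
set e := foldl _ y' l.
have IH' := IH y'; rewrite -/e in IH'.
set T := \sum_(j <- l) G j in IH' *.
have hT : 0 <= T by apply: sumr_ge0 => j _; exact: ltW.
have F1 : sqnorm (y' - z) = sqnorm (y - z) - 2 * eta * dot (g a y) (y - z)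
     + eta ^+ 2 * sqnorm (g a y).
  rewrite /y' (_ : y - eta *: g a y - z = (y - z) - eta *: g a y); last first.
    by rewrite addrAC.
  by rewrite (sqnormB (y - z) (eta *: g a y)) sqnormZ dotZr (dotC (y - z)); ring.
have F2 := hsub a y z.
rewrite -[z - y]opprB dotNr in F2.
have F3 := hsub a w y.
rewrite (_ : y - w = (e - w) + (y - e)) in F3; last by rewrite [RHS]addrC addrA subrK.
rewrite dotDr in F3.
have hp : sqnorm (- g a w) <= G a ^+ 2 by rewrite sqnormN hg.
have F4 : dot (- g a w) (y - e) <= eta * G a * (G a + T).
  have -> : y - e = eta *: g a y + (y' - e) by rewrite /y' addrA (addrC (eta *: g a y)) subrK.
  rewrite dotDr dotZr.
  have h1 := dot_le (hG a) (hG a) hp (hg a y).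
  have h2 := disp_le he (hG a) hG hg hp l y'.
  rewrite -/e -/T in h2.
  have : eta * dot (- g a w) (g a y) <= eta * (G a * G a) by rewrite ler_pM2l.
  nra.
rewrite dotNl in F4.
have F5 := hg a y.
have hGa := hG a.
have K1 : eta * (fi a w + dot (g a w) (e - w) + dot (g a w) (y - e) - fi a z)
   <= eta * dot (g a y) (y - z) by rewrite ler_pM2l //; lra.
have K2 : eta * (- dot (g a w) (y - e)) <= eta * (eta * G a * (G a + T))
  by rewrite ler_pM2l.
have K3 : eta ^+ 2 * sqnorm (g a y) <= eta ^+ 2 * G a ^+ 2
  by rewrite ler_pM2l // exprn_gt0.
have K4 : 0 <= eta ^+ 2 * G a * T by rewrite mulr_ge0 // mulr_ge0 ?sqr_ge0 ?ltW.
rewrite F1 in IH'.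
cbv zeta in IH'. nra.
Qed.

Local Close Scope ereal_scope.
Local Open Scope ring_scope.

Lemma lim0 (R : realType) (A B : R) : 0 <= B ->
  (forall t, 0 < t <= 1 -> 0 <= A + t * B) -> 0 <= A.
Proof.
move=> hB H; case: (lerP 0 A) => // hA.
have hAB : 0 < - A + B by lra.
have ht0 : 0 < - A / (- A + B) by rewrite divr_gt0 // oppr_gt0.
have ht1 : - A / (- A + B) <= 1 by rewrite ler_pdivrMr // mul1r; lra.
have := H _ (introT andP (conj ht0 ht1)).
have -> : A + - A / (- A + B) * B = - (A * A) / (- A + B).
  by field; rewrite gt_eqF.
have : 0 < A * A / (- A + B) by rewrite divr_gt0 // nmulr_rgt0.
rewrite mulNr; lra.
Qed.

Lemma sum_perm (R : realType) n (s : 'S_n) (F : 'I_n -> R) :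
  \sum_(a <- [seq s i | i <- enum 'I_n]) F a = \sum_i F i.
Proof. rewrite big_map big_enum [RHS](reindex_inj (@perm_inj _ s)) /=.
by apply: eq_bigl => i. Qed.

Local Open Scope ereal_scope.

Lemma prox_esubgrad (R : realType) d (psi : vec R d -> \bar R) (N eta : R)
  (c w : vec R d) :
  (0 < N)%R -> (0 < eta)%R -> (forall x, psi x != -oo) -> convex_efun psi ->
  psi w \is a fin_num ->
  (forall y, N%:E * psi w + (sqnorm (w - c) / (2 * eta))%:E
     <= N%:E * psi y + (sqnorm (y - c) / (2 * eta))%:E) ->
  esubgrad psi w ((N * eta)^-1 *: (c - w)).
Proof.
move=> hN he hninf hconv hw hprox; split=> // x.
case Ex: (psi x) => [r| |]; last 2 first.
- exact: leey.
- by have := hninf x; rewrite Ex.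
set pw := fine (psi w).
have Epw : psi w = pw%:E by rewrite /pw fineK.
rewrite Epw -EFinD lee_fin.
set D := dot (w - c)%R (x - w)%R.
set Q := sqnorm (x - w)%R.
have key : forall t, (0 < t <= 1)%R ->
    (0 <= (N * (r - pw) + D / eta) + t * (Q / (2 * eta)))%R.
  move=> t /andP[t0 t1].
  have ht : (0 <= t <= 1)%R by rewrite t1 ltW.
  have hc := hconv x w t ht.
  rewrite Ex Epw -!EFinM -EFinD in hc.
  have hp := hprox (t *: x + (1 - t) *: w)%R.
  rewrite Epw in hp.
  have hyt : (t *: x + (1 - t) *: w - c = (w - c) + t *: (x - w))%R.
    by apply/rowP => j; rewrite !mxE; ring.
  rewrite hyt (sqnormD (w - c)%R (t *: (x - w))%R) sqnormZ dotZr -/D -/Q in hp.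
  have : ((N * pw + sqnorm (w - c) / (2 * eta))%:E
     <= (N * (t * r + (1 - t) * pw) +
          (sqnorm (w - c) + 2 * (t * D) + t ^+ 2 * Q) / (2 * eta))%:E).
    apply: le_trans hp _; rewrite [X in _ <= X]EFinD (EFinM N).
    apply: leeD2r; apply: lee_wpmul2l => //.
    by rewrite lee_fin ltW.
  rewrite lee_fin => h.
  have h2 : (0 <= t * ((N * (r - pw) + D / eta) + t * (Q / (2 * eta))))%R.
    have -> : (t * ((N * (r - pw) + D / eta) + t * (Q / (2 * eta))) =
      (N * (t * r + (1 - t) * pw) +
          (sqnorm (w - c) + 2 * (t * D) + t ^+ 2 * Q) / (2 * eta))
      - (N * pw + sqnorm (w - c) / (2 * eta)))%R.
      by field; rewrite gt_eqF.
    lra.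
  by rewrite pmulr_rge0 in h2.
have hQ : (0 <= Q / (2 * eta))%R by rewrite divr_ge0 ?sqnorm_ge0 // mulr_ge0 // ltW.
have hA := lim0 hQ key.
rewrite dotZl -[(c - w)%R]opprB dotNl -/D.
have : (0 <= (N * (r - pw) + D / eta) / N)%R by rewrite divr_ge0 // ltW.
have -> : ((N * (r - pw) + D / eta) / N = r - pw + (N * eta)^-1 * D)%R.
  by field; rewrite !gt_eqF.
lra.
Qed.

Local Close Scope ereal_scope.
Local Open Scope ring_scope.

Lemma young_sum (R : realType) n d (g : 'I_n -> vec R d) (G : 'I_n -> R) (eta : R)
  (v : vec R d) : (0 < n)%N -> (forall i, 0 < G i) ->
  (forall i, sqnorm (g i) <= G i ^+ 2) ->
  - (2 * eta * \sum_i dot (g i) v) <= eta ^+ 2 * (\sum_i G i) ^+ 2 + sqnorm v.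
Proof.
move=> hn hG hg.
set T := \sum_i G i.
have hT : 0 < T.
  apply: (@lt_le_trans _ _ (G (Ordinal hn))); first exact: hG.
  rewrite /T (bigD1 (Ordinal hn)) //= lerDl.
  by apply: sumr_ge0 => i _; apply: ltW.
have -> : eta ^+ 2 * T ^+ 2 + sqnorm v =
    \sum_i (eta ^+ 2 * (T * G i) + sqnorm v * (G i / T)).
  rewrite big_split /= -!mulr_sumr -mulr_suml -/T.
  by field; rewrite gt_eqF.
rewrite mulr_sumr -sumrN; apply: ler_sum => i _.
have hl : 0 < T / G i by rewrite divr_gt0.
have hy := @young R d eta (T / G i) (g i) v hl.
apply: le_trans hy _.
have hGi := hG i.
rewrite lerD //.
  have -> : eta ^+ 2 * (T * G i) = eta ^+ 2 * (T / G i) * G i ^+ 2.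
    by field; rewrite gt_eqF.
  by rewrite ler_wpM2l ?hg // mulr_ge0 ?sqr_ge0 // ltW.
by rewrite invf_div.
Qed.

Local Open Scope ereal_scope.

Lemma epoch_bound (R : realType) n d (fi : 'I_n -> vec R d -> R)
  (g : 'I_n -> vec R d -> vec R d) (psi : vec R d -> \bar R) (mu : R)
  (G : 'I_n -> R) (eta : R) (s : 'S_n) (xk w z : vec R d) :
  (0 < n)%N -> (0 < eta)%R -> (forall i, 0 < G i)%R ->
  (forall i y, sqnorm (g i y) <= G i ^+ 2)%R ->
  (forall i y, subgrad (fi i) y (g i y)) -> (forall x, psi x != -oo) ->
  convex_efun psi -> mu_condition psi mu ->
  psi w \is a fin_num -> psi z \is a fin_num ->
  (forall y, n%:R%:E * psi w + (sqnorm (w - epoch_end g s eta xk) / (2 * eta))%:E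
     <= n%:R%:E * psi y + (sqnorm (y - epoch_end g s eta xk) / (2 * eta))%:E) ->
  forall f : vec R d -> R, (forall y, f y = (n%:R^-1 * \sum_(i < n) fi i y)%R) ->
  ((1 + n%:R * eta * mu) * sqnorm (w - z) <= sqnorm (xk - z)
     - 2 * eta * n%:R * ((f w + fine (psi w)) - (f z + fine (psi z)))
     + 4 * eta ^+ 2 * (\sum_i G i) ^+ 2)%R.
Proof.
move=> hn he hG hg hsub hninf hconv hmu hw hz hprox f hf.
set c := epoch_end g s eta xk.
set N : R := n%:R.
have hN : (0 < N)%R by rewrite /N ltr0n.
have hsg := prox_esubgrad hN he hninf hconv hw hprox.
have hm := hmu.2 z w _ hsg.
rewrite -(fineK hw) -(fineK hz) -EFinD lee_fin dotZl in hm.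
rewrite -/c in hm.
set pw := fine (psi w) in hm *.
set pz := fine (psi z) in hm *.
have hin : (sqnorm (c - z) <= sqnorm (xk - z)
     - 2 * eta * \sum_(a <- [seq s i | i <- enum 'I_n]) (fi a w - fi a z)
     - 2 * eta * \sum_(a <- [seq s i | i <- enum 'I_n]) dot (g a w) (c - w)
     + 3 * eta ^+ 2 * (\sum_(a <- [seq s i | i <- enum 'I_n]) G a) ^+ 2)%R.
  exact: (inner_step z w he hG hg hsub [seq s i | i <- enum 'I_n] xk).
rewrite !sum_perm sumrB in hin.
have hy := @young_sum R n d (fun i => g i w) G eta (c - w)%R hn hG (fun i => hg i w).
set T := (\sum_i G i)%R in hin hy *.
set Dd := (\sum_i dot (g i w) (c - w))%R in hin hy.
have hfw : (\sum_i fi i w = N * f w)%R by rewrite hf mulrA mulfV ?gt_eqF // mul1r.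
have hfz : (\sum_i fi i z = N * f z)%R by rewrite hf mulrA mulfV ?gt_eqF // mul1r.
rewrite hfw hfz in hin.
have hid : (sqnorm (w - z) = sqnorm (c - z) - sqnorm (c - w) + 2 * dot (c - w) (z - w))%R.
  have e1 : (c - z = (c - w) + (w - z))%R by rewrite addrA subrK.
  rewrite e1 (sqnormD (c - w)%R (w - z)%R) -[(w - z)%R]opprB dotNr; lra.
have hsym : sqnorm (z - w)%R = sqnorm (w - z)%R by exact: sqnorm_sym.
rewrite hsym in hm.
set D := dot (c - w)%R (z - w)%R in hm hid.
have hm2 : (N * eta * pw + D + N * eta * mu / 2 * sqnorm (w - z) <= N * eta * pz)%R.
  have hNe : (0 < N * eta)%R by rewrite mulr_gt0.
  have key : (N * eta * (pw + ((N * eta)^-1 * D + mu / 2 * sqnorm (w - z)))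
     <= N * eta * pz)%R by rewrite ler_pM2l.
  have eq : (N * eta * (pw + ((N * eta)^-1 * D + mu / 2 * sqnorm (w - z))) =
     N * eta * pw + D + N * eta * mu / 2 * sqnorm (w - z))%R.
    by field; rewrite !gt_eqF.
  lra.
rewrite /N in hm2 hfw hfz hin.
nra.
Qed.

Local Close Scope ereal_scope.
Local Open Scope ring_scope.

Lemma lin_sum (R : realType) (r : seq nat) (w X Y : nat -> R) (a b h e : R) :
  \sum_(j <- r) w j * (a * X j - b * (h - Y j) + e) =
  a * \sum_(j <- r) w j * X j - b * h * \sum_(j <- r) w j
  + b * \sum_(j <- r) w j * Y j + e * \sum_(j <- r) w j.
Proof. elim: r => [|j r IH]; rewrite ?big_nil ?big_cons; [ring | rewrite IH; ring]. Qed.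

Lemma lin_sum2 (R : realType) (r : seq nat) (w X : nat -> R) (p : R) :
  \sum_(j <- r) w j * (p * X j) = p * \sum_(j <- r) w j * X j.
Proof. elim: r => [|j r IH]; rewrite ?big_nil ?big_cons; [ring | rewrite IH; ring]. Qed.

Lemma ident (R : realType) (g0 g1 a h m : R) : a != 0 -> g0 + a != 0 ->
  g0 / (g0 + a) * h + a * m - g1 * (m + (a^-1 - (g0 + a)^-1) * h) =
  (a - g1) * (m + (a^-1 - (g0 + a)^-1) * h).
Proof. by move=> ha hb; field; rewrite ha hb. Qed.

Lemma outer (R : realType) (K : nat) (c : R) (gam P E H Dx v : nat -> R)
  (Dj : nat -> nat -> R) :
  (1 <= K)%N -> 0 < c -> (forall k, (1 <= k <= K)%N -> 0 < gam k) ->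
  (forall k, v k = \sum_(k <= l < K.+1) gam l) ->
  P 1%N = 1 -> 1 <= P K.+1 -> 0 <= Dx K.+1 -> (forall j, 0 <= Dj K.+1 j) ->
  (forall k, Dj k k = 0) ->
  (forall k, (1 <= k <= K)%N ->
     P k.+1 * Dx k.+1 <= P k * Dx k - c * gam k * H k.+1 + E k) ->
  (forall k j, (1 <= k <= K)%N -> (2 <= j <= k)%N ->
     P k.+1 * Dj k.+1 j <= P k * Dj k j - c * gam k * (H k.+1 - H j) + E k) ->
  H K.+1 <= (Dx 1%N - Dx K.+1) / (c * v 1%N)
            + \sum_(1 <= k < K.+1) E k / (c * v k).
Proof.
move=> hK hc hgam hv hP1 hPK hDx hDj hDjj hstepx hstepj.
have vK1 : v K.+1 = 0 by rewrite hv big_geq.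
have vS : forall k, (k <= K)%N -> v k = gam k + v k.+1.
  by move=> k hk; rewrite !hv big_ltn.
have vge0 : forall k, (1 <= k)%N -> 0 <= v k.
  move=> k hk; rewrite hv big_nat_cond; apply: sumr_ge0 => l /andP[/andP[h1 h2] _].
  by apply: ltW; apply: hgam; rewrite (leq_trans hk h1) -ltnS.
have vgt0 : forall k, (1 <= k <= K)%N -> 0 < v k.
  move=> k /andP[h1 h2]; rewrite vS //.
  have := hgam k (introT andP (conj h1 h2)); have := vge0 k.+1 isT; lra.
pose w := fun j => (v j)^-1 - (v j.-1)^-1.
have wge0 : forall j, (2 <= j <= K)%N -> 0 <= w j.
  move=> j /andP[h1 h2].
  have hj1 : (1 <= j.-1 <= K)%N by apply/andP; split; [rewrite -ltnS prednK // ltnW | rewrite (leq_trans (leq_pred _))].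
  have hj : (1 <= j <= K)%N by rewrite h2 ltnW.
  have := vS j.-1 (leq_trans (leq_pred _) h2); rewrite prednK ?(ltnW h1) // => e.
  have -> : w j = gam j.-1 / (v j * v j.-1).
    by rewrite /w e; field; rewrite -e !gt_eqF ?vgt0.
  by rewrite divr_ge0 ?mulr_ge0 ?ltW ?vgt0 ?hgam.
have tele : forall k, (1 <= k <= K)%N ->
    (v 1%N)^-1 + \sum_(2 <= j < k.+1) w j = (v k)^-1.
  elim=> [//|k IH] /andP[h1 h2].
  case: k IH h1 h2 => [|k] IH h1 h2; first by rewrite big_geq ?addr0.
  rewrite big_nat_recr //= addrA IH; last by rewrite /= ltnW.
  by rewrite /w /=; ring.
pose Psi := fun k => P k * (Dx k / v 1%N + \sum_(2 <= j < k) w j * Dj k j).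
pose M := fun k => \sum_(2 <= j < k.+1) w j * H j.
have hDk : forall k, (1 <= k)%N ->
    \sum_(2 <= j < k.+1) w j * Dj k j = \sum_(2 <= j < k) w j * Dj k j.
  case=> [//|k] _.
  case: k => [|k]; first by rewrite !big_geq.
  by rewrite big_nat_recr //= hDjj mulr0 addr0.
have step : forall k, (1 <= k <= K)%N ->
    Psi k.+1 <= Psi k - c * gam k * (H k.+1 / v k - M k) + E k / v k.
  move=> k hk.
  have hsum : \sum_(2 <= j < k.+1) w j * (P k.+1 * Dj k.+1 j) <=
      \sum_(2 <= j < k.+1) w j * (P k * Dj k j - c * gam k * (H k.+1 - H j) + E k).
    rewrite big_nat_cond [X in _ <= X]big_nat_cond.
    apply: ler_sum => j /andP[/andP[hj1 hj2] _].
    have hjk : (j <= k)%N by rewrite -ltnS.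
    apply: ler_wpM2l.
      by apply: wge0; rewrite hj1 (leq_trans hjk) //; case/andP: hk.
    by apply: hstepj; rewrite // hj1.
  rewrite lin_sum lin_sum2 in hsum.
  rewrite (hDk k) in hsum; last by case/andP: hk.
  have ht := tele k hk.
  have hx := hstepx k hk.
  have hv1 : 0 <= (v 1%N)^-1 by rewrite invr_ge0 vge0.
  have hx2 : (v 1%N)^-1 * (P k.+1 * Dx k.+1) <=
      (v 1%N)^-1 * (P k * Dx k - c * gam k * H k.+1 + E k) by rewrite ler_wpM2l.
  rewrite /Psi /M.
  set SW := \sum_(2 <= j < k.+1) w j in hsum ht.
  set SD := \sum_(2 <= j < k) w j * Dj k j in hsum *.
  set SD1 := \sum_(2 <= j < k.+1) w j * Dj k.+1 j in hsum *.
  set MM := \sum_(2 <= j < k.+1) w j * H j in hsum *.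
  have e1 : E k / v k = E k * ((v 1%N)^-1 + SW) by rewrite ht.
  have e2 : c * gam k * (H k.+1 / v k - MM) =
     c * gam k * (H k.+1 * ((v 1%N)^-1 + SW) - MM) by rewrite ht.
  nra.
have ind : forall k, (1 <= k <= K)%N ->
    Psi k.+1 <= Psi 1%N - c * (gam k / v k * H k.+1 + v k.+1 * M k)
               + \sum_(1 <= l < k.+1) E l / v l.
  elim=> [//|k IH] /andP[h1 h2].
  case: k IH h1 h2 => [|k] IH h1 h2.
    have := step 1%N (introT andP (conj (leqnn 1) hK)).
    rewrite /M big_geq // big_nat1 mulr0 addr0.
    move=> h; lra.
  have hk1 : (1 <= k.+1 <= K)%N by rewrite /= ltnW.
  have := IH hk1.
  have := step k.+2 (introT andP (conj h1 h2)).
  have hM : M k.+2 = M k.+1 + w k.+2 * H k.+2 by rewrite /M big_nat_recr.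
  rewrite hM.
  have ev := vS k.+1 (ltnW h2).
  have ev2 := vS k.+2 h2.
  have hv1 : v k.+2 != 0 by rewrite gt_eqF ?vgt0 // h2.
  have hv0 : gam k.+1 + v k.+2 != 0 by rewrite -ev gt_eqF ?vgt0.
  have := ident (gam k.+2) (H k.+2) (M k.+1) hv1 hv0.
  rewrite /w /= -ev.
  move=> hid h3 h4.
  have e5 : v k.+3 = v k.+2 - gam k.+2 by rewrite ev2; ring.
  rewrite e5 big_nat_recr //=.
  have hid2 := congr1 (fun t => c * t) hid; simpl in hid2.
  lra.
have := ind K (introT andP (conj hK (leqnn K))).
rewrite vK1 mul0r addr0.
have -> : gam K / v K = 1.
  rewrite vS // vK1 addr0 divff // gt_eqF //; apply: hgam; by rewrite hK leqnn.
rewrite mul1r.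
have hPsi1 : Psi 1%N = Dx 1%N / v 1%N by rewrite /Psi hP1 big_geq // addr0 mul1r.
have hPsiK : Dx K.+1 / v 1%N <= Psi K.+1.
  rewrite /Psi.
  have hS : 0 <= \sum_(2 <= j < K.+1) w j * Dj K.+1 j.
    rewrite big_nat_cond; apply: sumr_ge0 => j /andP[/andP[hj1 hj2] _].
    by rewrite mulr_ge0 // wge0 // hj1 -ltnS.
  have hA : 0 <= Dx K.+1 / v 1%N by rewrite divr_ge0 // vge0.
  nra.
rewrite hPsi1 => hfin.
have hfin2 : c * H K.+1 <= (Dx 1%N - Dx K.+1) / v 1%N + \sum_(1 <= l < K.+1) E l / v l.
  rewrite mulrBl; lra.
have -> : \sum_(1 <= k < K.+1) E k / (c * v k) = c^-1 * \sum_(1 <= l < K.+1) E l / v l.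
  by rewrite mulr_sumr; apply: eq_bigr => l _; rewrite invfM mulrCA.
have -> : (Dx 1%N - Dx K.+1) / (c * v 1%N) = c^-1 * ((Dx 1%N - Dx K.+1) / v 1%N).
  by rewrite invfM mulrCA.
rewrite -mulrDr -(ler_pM2l hc) mulrA mulfV ?gt_eqF // mul1r.
done.
Qed.

Local Close Scope ereal_scope.
Local Open Scope ring_scope.

Lemma term_eq (R : realType) (N T a u : R) : N != 0 ->
  4 * a * T ^+ 2 / (2 * N * u) = (2 * T ^+ 2 / N) * (a / u).
Proof.
move=> hN; have [->|hu] := eqVneq u 0; first by rewrite mulr0 !invr0 !mulr0.
by field; rewrite hN hu.
Qed.

Unset Implicit Arguments.
Local Open Scope ereal_scope.

Theorem mainTheorem11 (R : realType) (n d : nat)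
    (fi : 'I_n -> vec R d -> R) (g : 'I_n -> vec R d -> vec R d)
    (psi : vec R d -> \bar R) (mu : R) (G : 'I_n -> R)
    (xstar : vec R d) (K : nat) (eta : nat -> R) (sigma : nat -> 'S_n)
    (x : nat -> vec R d) :
  (0 < n)%N ->
  (forall i, convex_fun (fi i)) ->
  (forall i y, subgrad (fi i) y (g i y)) ->
  proper_fun psi -> convex_efun psi -> closed_fun psi ->
  (forall i, 0 < G i)%R ->
  (forall i y v, subgrad (fi i) y v -> enorm v <= G i)%R ->
  mu_condition psi mu ->
  let f := fun y => (n%:R^-1 * \sum_(i < n) fi i y)%R in
  let F := fun y => (f y)%:E + psi y in
  psi xstar \is a fin_num ->
  (forall y, F xstar <= F y) ->
  (2 <= K)%N ->
  (forall k, (1 <= k <= K)%N -> 0 < eta k)%R ->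
  psi (x 1%N) \is a fin_num ->
  (forall k, (1 <= k <= K)%N ->
     forall y : vec R d,
       n%:R%:E * psi (x k.+1)
         + (sqnorm (x k.+1 - epoch_end g (sigma k) (eta k) (x k))
              / (2 * eta k))%:E
       <= n%:R%:E * psi y
         + (sqnorm (y - epoch_end g (sigma k) (eta k) (x k)) / (2 * eta k))%:E) ->
  let gamma := fun k : nat =>
    (eta k * \prod_(2 <= l < k.+1) (1 + n%:R * eta l.-1 * mu))%R in
  let Gbar := (n%:R^-1 * \sum_(i < n) G i)%R in
  F (x K.+1) <= F xstar +
    ((sqnorm (xstar - x 1%N) - sqnorm (xstar - x K.+1))
        / (2 * n%:R * \sum_(1 <= k < K.+1) gamma k)
     + 3 * Gbar ^+ 2 * n%:R *
         \sum_(1 <= k < K.+1) (gamma k * eta k / \sum_(k <= l < K.+1) gamma l))%:E.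
Proof.
move=> hn hcf hsub hprop hconv hcl hG hlip hmu f F hxs hmin hK heta hx1 hprox.
cbv zeta.
set gamma := (fun k : nat => (eta k * \prod_(2 <= l < k.+1) (1 + n%:R * eta l.-1 * mu))%R).
set Gbar := (n%:R^-1 * \sum_(i < n) G i)%R.
have hg : forall i y, (sqnorm (g i y) <= G i ^+ 2)%R.
  by move=> i y; apply: enorm_sq; apply: hlip (hsub i y).
have hninf : forall y, psi y != -oo := hprop.1.
have hN : (0 < n%:R :> R)%R by rewrite ltr0n.
have hK1 : (1 <= K)%N by apply: leq_trans hK.
have hfin : forall k, (1 <= k <= K.+1)%N -> psi (x k) \is a fin_num.
  case=> [//|k] /andP[_ hk].
  case: k hk => [|k] hk; first exact: hx1.
  have hk' : (1 <= k.+1 <= K)%N by [].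
  have h := hprox k.+1 hk' (x 1%N).
  rewrite fin_numE hninf /=; apply/negP => /eqP hinf.
  rewrite hinf -(fineK hx1) mulry gtr0_sg // mul1e addye // -EFinM -EFinD leye_eq in h.
set T := (\sum_i G i)%R.
pose Fr := fun y => (f y + fine (psi y))%R.
pose P := fun k => (\prod_(2 <= l < k.+1) (1 + n%:R * eta l.-1 * mu))%R.
have hgamP : forall k, gamma k = (eta k * P k)%R by [].
have hPS : forall k, (1 <= k)%N -> P k.+1 = (P k * (1 + n%:R * eta k * mu))%R.
  by move=> k hk; rewrite /P big_nat_recr.
have hfac : forall k, (1 <= k <= K)%N -> (1 <= 1 + n%:R * eta k * mu)%R.
  move=> k hk; have := heta k hk; have := hmu.1 => h1 h2.
  by rewrite lerDl mulr_ge0 // mulr_ge0 // ltW.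
have hP1 : P 1%N = 1%R by rewrite /P big_geq.
have hPge1 : forall k, (1 <= k <= K.+1)%N -> (1 <= P k)%R.
  elim=> [//|k IH] /andP[_ hk].
  case: k IH hk => [|k] IH hk; first by rewrite hP1.
  rewrite hPS //; apply: mulr_ege1; first by apply: IH; rewrite /= ltnW.
  by apply: hfac.
have hgam : forall k, (1 <= k <= K)%N -> (0 < gamma k)%R.
  move=> k hk; rewrite hgamP mulr_gt0 ?heta //.
  apply: (lt_le_trans ltr01); apply: hPge1.
  by case/andP: hk => h1 h2; rewrite h1 ltnW.
have hE : forall k z, (1 <= k <= K)%N -> psi z \is a fin_num ->
    ((1 + n%:R * eta k * mu) * sqnorm (x k.+1 - z) <= sqnorm (x k - z)
      - 2 * eta k * n%:R * (Fr (x k.+1) - Fr z) + 4 * eta k ^+ 2 * T ^+ 2)%R.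
  move=> k z hk hz.
  have hw : psi (x k.+1) \is a fin_num.
    by apply: hfin; case/andP: hk => h1 h2.
  exact: (epoch_bound hn (heta k hk) hG hg hsub hninf hconv hmu hw hz (hprox k hk)
          (fun y => erefl)).
have hc : (0 < 2 * n%:R :> R)%R by rewrite mulr_gt0.
have hDjj : forall k, sqnorm (x k - x k)%R = 0%R.
  by move=> k; rewrite subrr /sqnorm /dot big1 // => j _; rewrite mxE mulr0.
have hstepx : forall k, (1 <= k <= K)%N ->
    (P k.+1 * sqnorm (x k.+1 - xstar) <= P k * sqnorm (x k - xstar)
      - 2 * n%:R * gamma k * (Fr (x k.+1) - Fr xstar)
      + 4 * (gamma k * eta k) * T ^+ 2)%R.
  move=> k hk.
  have h := hE k xstar hk hxs.
  have hp : (0 <= P k)%R.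
    by apply: le_trans (hPge1 k _); rewrite ?ler01 //; case/andP: hk => h1 h2; rewrite h1 ltnW.
  have := ler_wpM2l hp h.
  rewrite hPS ?hgamP; last by case/andP: hk.
  move=> h2; nra.
have hstepj : forall k j, (1 <= k <= K)%N -> (2 <= j <= k)%N ->
    (P k.+1 * sqnorm (x k.+1 - x j) <= P k * sqnorm (x k - x j)
      - 2 * n%:R * gamma k * ((Fr (x k.+1) - Fr xstar) - (Fr (x j) - Fr xstar))
      + 4 * (gamma k * eta k) * T ^+ 2)%R.
  move=> k j hk hj.
  have hz : psi (x j) \is a fin_num.
    apply: hfin; case/andP: hk => h1 h2; case/andP: hj => h3 h4.
    by rewrite (leq_trans _ h3) //= (leq_trans h4) // ltnW.
  have h := hE k (x j) hk hz.
  have hp : (0 <= P k)%R.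
    by apply: le_trans (hPge1 k _); rewrite ?ler01 //; case/andP: hk => h1 h2; rewrite h1 ltnW.
  have := ler_wpM2l hp h.
  rewrite hPS ?hgamP; last by case/andP: hk.
  move=> h2; nra.
have hout := @outer R K (2 * n%:R)%R gamma P
  (fun k => 4 * (gamma k * eta k) * T ^+ 2)%R (fun k => Fr (x k) - Fr xstar)%R
  (fun k => sqnorm (x k - xstar)%R) (fun k => \sum_(k <= l < K.+1) gamma l)%R
  (fun k j => sqnorm (x k - x j)%R) hK1 hc hgam (fun k => erefl) hP1
  (hPge1 K.+1 (leqnn _)) (sqnorm_ge0 _) (fun j => sqnorm_ge0 _) hDjj hstepx hstepj.
simpl in hout.
rewrite (sqnorm_sym (x 1%N)) (sqnorm_sym (x K.+1)) in hout.
have hv : forall k, (1 <= k)%N -> (0 <= \sum_(k <= l < K.+1) gamma l)%R.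
  move=> k hk; rewrite big_nat_cond; apply: sumr_ge0 => l /andP[/andP[h1 h2] _].
  by apply: ltW; apply: hgam; rewrite (leq_trans hk h1) -ltnS.
have hsum : (\sum_(1 <= k < K.+1) 4 * (gamma k * eta k) * T ^+ 2 /
        (2 * n%:R * \sum_(k <= l < K.+1) gamma l) =
    (2 * T ^+ 2 / n%:R) * \sum_(1 <= k < K.+1)
        (gamma k * eta k / \sum_(k <= l < K.+1) gamma l))%R.
  by rewrite mulr_sumr; apply: eq_bigr => k _; apply: term_eq; rewrite gt_eqF.
rewrite hsum in hout.
set S := (\sum_(1 <= k < K.+1) (gamma k * eta k / \sum_(k <= l < K.+1) gamma l))%R in hout *.
have hS : (0 <= S)%R.
  rewrite /S big_nat_cond; apply: sumr_ge0 => k /andP[/andP[h1 h2] _].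
  have hk : (1 <= k <= K)%N by rewrite h1 -ltnS.
  by rewrite divr_ge0 ?hv // mulr_ge0 // ltW ?hgam ?heta.
have hGb : (3 * Gbar ^+ 2 * n%:R = 3 * T ^+ 2 / n%:R)%R.
  by rewrite /Gbar /T; field; rewrite gt_eqF.
rewrite hGb.
have hq : (0 <= T ^+ 2 / n%:R * S)%R by rewrite mulr_ge0 // divr_ge0 ?sqr_ge0 // ltW.
rewrite /F -(fineK (hfin K.+1 _)); last by rewrite leqnn.
rewrite -(fineK hxs) -!EFinD lee_fin.
rewrite /Fr in hout.
lra.
Qed.
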